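(* Let $W\in\mathbb{R}^{n\times n}$ be positive definite (i.e. $x^TWx>0$ for all nonzero $x\in\mathbb{R}^n$; $W$ need not be symmetric), let $B\in\mathbb{R}^{m\times n}$ with $\operatorname{rank}(B)<m\le n$, and let $$A=\begin{pmatrix} W & B^T\\ -B & 0\end{pmatrix},$$ and let $b\in\mathbb{R}^{n+m}$ lie in the range of $A$. Let $P\in\mathbb{R}^{n\times n}$ be positive definite (not necessarily symmetric) and $$M=\begin{pmatrix} P & B^T\\ -B & 0\end{pmatrix}.$$ Consider the iteration $x^{(k+1)}=x^{(k)}+M^\dagger(b-Ax^{(k)})$, $k=0,1,2,\dots$, where $M^\dagger$ is the Moore–Penrose inverse of $M$. Let $E=BP^{-1}B^T$ and $X=P^{-1}-P^{-1}B^TE^\dagger BP^{-1}$. Then this iteration is convergent if and only if $\gamma(X(P-W))<1$.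
   Context: For a square matrix $T$ with spectrum $\sigma(T)$, $\gamma(T)=\max\{|\lambda|:\lambda\in\sigma(T)\setminus\{1\}\}$ (the pseudo-spectral radius). $E^\dagger$ denotes the Moore–Penrose inverse of $E$. The iteration is called convergent if the sequence $x^{(k)}$ converges (to a solution of $Ax=b$) for every initial guess $x^{(0)}$; equivalently, with iteration matrix $T=I-M^\dagger A$, the limit $\lim_{k\to\infty}T^k$ exists. *)

(* Defs.v *)
From HB Require Import structures.
From mathcomp Require Import all_boot all_order all_algebra.
From mathcomp Require Import all_classical all_reals.
From mathcomp Require Import topology normedtype sequences.
From mathcomp.real_closed Require Import complex.
Set Implicit Arguments. Unset Strict Implicit. Unset Printing Implicit Defensive.
Import Order.TTheory GRing.Theory Num.Theory.
Import numFieldNormedType.Exports.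
Local Open Scope ring_scope.
Local Open Scope classical_set_scope.

Definition posdef (R : realType) (n : nat) (W : 'M[R]_n) : Prop :=
  forall x : 'cV[R]_n, x != 0 -> 0 < (x^T *m W *m x) 0 0.

Definition is_MP (R : realType) (p q : nat) (A : 'M[R]_(p, q)) (X : 'M[R]_(q, p)) : Prop :=
  [/\ A *m X *m A = A, X *m A *m X = X,
      (A *m X)^T = A *m X & (X *m A)^T = X *m A].

(* Moore--Penrose inverse (exists and is unique; chosen by classical choice) *)
Definition mpinv (R : realType) (p q : nat) (A : 'M[R]_(p, q)) : 'M[R]_(q, p) :=
  xget 0 [set X | is_MP A X].

Definition cplx_mx (R : realType) (n : nat) (T : 'M[R]_n) : 'M[R[i]]_n :=
  map_mx (real_complex R) T.

(* pseudo-spectral radius: max{|lambda| : lambda in sigma(T) \ {1}}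
   (spectrum over the complex numbers; max over the empty set is 0) *)
Definition gamma (R : realType) (n : nat) (T : 'M[R]_n) : R :=
  sup [set Normc.normc l | l in [set l : R[i] | eigenvalue (cplx_mx T) l /\ l != 1]].

Definition iter_seq (R : realType) (N : nat) (A Md : 'M[R]_N) (b x0 : 'cV[R]_N)
  : nat -> 'cV[R]_N :=
  fix f k := if k is k'.+1 then f k' + Md *m (b - A *m f k') else x0.

Definition iteration_convergent (R : realType) (N : nat) (A Md : 'M[R]_N) (b : 'cV[R]_N) : Prop :=
  forall x0 : 'cV[R]_N, exists xs : 'cV[R]_N,
    (forall i j, (fun k => iter_seq A Md b x0 k i j) @ \oo --> xs i j) /\ A *m xs = b.

(* Main.v *)
Require Import Defs.
From HB Require Import structures.
From mathcomp Require Import all_boot all_order all_algebra.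
From mathcomp Require Import all_classical all_reals.
From mathcomp Require Import topology normedtype sequences.
From mathcomp.real_closed Require Import complex.
Set Implicit Arguments. Unset Strict Implicit. Unset Printing Implicit Defensive.
Import Order.TTheory GRing.Theory Num.Theory.
Import numFieldNormedType.Exports.
Local Open Scope ring_scope.
Local Open Scope classical_set_scope.
From mathcomp Require Import lra.

Section LA.
Variable R : realType.

Lemma sqr_rV_eq0 q (v : 'rV[R]_q) : (v *m v^T) 0 0 = 0 -> v = 0.
Proof.
rewrite !mxE => H; apply/rowP => i; rewrite mxE.
have h0 : forall j, predT j -> 0 <= v 0 j * v^T j 0.
  by move=> j _; rewrite mxE -expr2 sqr_ge0.
have := psumr_eq0P h0 H (i := i) isT.
by rewrite mxE => /eqP; rewrite mulf_eq0 orbb => /eqP.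
Qed.

Lemma free_unit q r (K : 'M[R]_(r, q)) : row_free K -> K *m K^T \in unitmx.
Proof.
move=> fK; rewrite -row_free_unit; apply/inj_row_free => v H.
have : (v *m K) *m (v *m K)^T = 0.
  by rewrite trmx_mul mulmxA -(mulmxA v) H mul0mx.
move=> H1; have H0 : v *m K = 0 by apply: sqr_rV_eq0; rewrite H1 mxE.
by apply: (row_free_inj fK); rewrite H0 mul0mx.
Qed.

Lemma MP_fact p q r (C : 'M[R]_(p, r)) (F : 'M[R]_(r, q)) :
  row_free C^T -> row_free F -> exists X, is_MP (C *m F) X.
Proof.
move=> fC fF; set A := C *m F.
have uF := free_unit fF; have uC := free_unit fC; rewrite trmxK in uC.
set U := invmx (F *m F^T); set V := invmx (C^T *m C).
have eA : A = C *m F by [].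
have FU : F *m F^T *m U = 1%:M by rewrite mulmxV.
have VC : V *m (C^T *m C) = 1%:M by rewrite mulVmx.
have UT : U^T = U by rewrite /U trmx_inv trmx_mul trmxK.
have VT : V^T = V by rewrite /V trmx_inv trmx_mul trmxK.
exists (F^T *m U *m V *m C^T).
have cF k (M : 'M_(k, r)) : M *m F *m F^T *m U = M.
  by rewrite -!mulmxA /U (mulmxA F) mulmxV // mulmx1.
have cC k (M : 'M_(k, r)) : M *m V *m C^T *m C = M.
  by rewrite -!mulmxA /V mulVmx // mulmx1.
have AX : A *m (F^T *m U *m V *m C^T) = C *m V *m C^T.
  by rewrite eA !mulmxA cF.
have XA : (F^T *m U *m V *m C^T) *m A = F^T *m U *m F.
  by rewrite eA !mulmxA cC.
split.
- by rewrite AX eA !mulmxA cC.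
- by rewrite XA !mulmxA cF.
- by rewrite AX !trmx_mul trmxK VT mulmxA.
- by rewrite XA !trmx_mul trmxK UT mulmxA.
Qed.

Lemma MP_exists p q (A : 'M[R]_(p, q)) : exists X, is_MP A X.
Proof.
have := @MP_fact p q _ (col_base A) (row_base A); rewrite mulmx_base; apply.
  by rewrite /row_free mxrank_tr; exact: col_base_full.
exact: row_base_free.
Qed.

Lemma MP_unique p q (A : 'M[R]_(p, q)) X Y : is_MP A X -> is_MP A Y -> X = Y.
Proof.
move=> [h1 h2 h3 h4] [k1 k2 k3 k4].
have e1 : A^T = A^T *m Y^T *m A^T by rewrite -!trmx_mul mulmxA k1.
have AXY : A *m X = A *m Y.
  rewrite -{1}h3 trmx_mul {1}e1 !mulmxA -trmx_mul h3 -mulmxA -trmx_mul k3.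
  by rewrite mulmxA h1.
have XAY : X *m A = Y *m A.
  rewrite -{1}h4 trmx_mul {1}e1 -(mulmxA (A^T *m Y^T)) -[A^T *m Y^T]trmx_mul -[A^T *m X^T]trmx_mul k4 h4.
  by rewrite mulmxA -(mulmxA Y A X) -mulmxA h1.
by rewrite -h2 -mulmxA AXY mulmxA XAY k2.
Qed.

Lemma mpinvP p q (A : 'M[R]_(p, q)) : is_MP A (mpinv A).
Proof.
rewrite /mpinv; case: xgetP => //= Hn.
by have [X hX] := MP_exists A; have := Hn X.
Qed.

Lemma mpinv_eq p q (A : 'M[R]_(p, q)) X : is_MP A X -> mpinv A = X.
Proof. by move=> h; apply: MP_unique (mpinvP A) h. Qed.

End LA.

Section PD.
Variable R : realType.

Lemma pd_zero_vec n (Q : 'M[R]_n) (x : 'cV[R]_n) : posdef Q ->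
  (x^T *m Q *m x) 0 0 = 0 -> x = 0.
Proof.
move=> pQ H; have [//|h] := eqVneq x 0.
by have := pQ x h; rewrite H ltxx.
Qed.

Lemma pd_zero n k (Q : 'M[R]_n) (C : 'M[R]_(n, k)) : posdef Q ->
  C^T *m Q *m C = 0 -> C = 0.
Proof.
move=> pQ H; apply/matrixP => i j; rewrite mxE.
have : C *m (delta_mx j 0 : 'M_(k, 1)) = 0.
  apply: (pd_zero_vec pQ).
  by rewrite trmx_mul !mulmxA -(mulmxA _ C^T) -(mulmxA _ (C^T *m Q)) H mulmx0 mul0mx mxE.
by rewrite -colE => h; have := congr1 (fun M : 'cV[R]_n => M i 0) h; rewrite !mxE.
Qed.

Lemma pd_unit n (P : 'M[R]_n) : posdef P -> P \in unitmx.
Proof.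
move=> pP; rewrite -row_free_unit; apply/inj_row_free => v H.
suff : v^T = 0 by move/(congr1 trmx); rewrite trmxK trmx0.
by apply: (pd_zero_vec pP); rewrite trmxK H mul0mx mxE.
Qed.

Lemma pd_inv n (P : 'M[R]_n) : posdef P -> posdef (invmx P).
Proof.
move=> pP x x0; have uP := pd_unit pP.
set w := invmx P *m x.
have xw : x = P *m w by rewrite /w mulmxA mulmxV // mul1mx.
have w0 : w != 0.
  by apply: contraNneq x0 => h; rewrite xw h mulmx0.
rewrite xw trmx_mul -!mulmxA (mulmxA (invmx P)) mulVmx //.
rewrite mul1mx mulmxA.
suff -> : (w^T *m P^T *m w) 0 0 = (w^T *m P *m w) 0 0 by exact: pP.
have h : (w^T *m P^T *m w)^T = w^T *m P *m w by rewrite !trmx_mul !trmxK mulmxA.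
by rewrite -h [RHS]mxE.
Qed.

End PD.

Section Blk.
Variables (R : realType) (n m : nat) (W P : 'M[R]_n) (B : 'M[R]_(m, n)).
Hypotheses (pdW : posdef W) (pdP : posdef P).
Local Notation Pi := (invmx P).
Local Notation E := (B *m invmx P *m B^T).
Local Notation S := (mpinv E).
Local Notation X := (invmx P - invmx P *m B^T *m mpinv E *m B *m invmx P).

Lemma uP : P \in unitmx. Proof. exact: pd_unit. Qed.
Lemma PPi : P *m Pi = 1%:M. Proof. by rewrite mulmxV // uP. Qed.
Lemma PiP : Pi *m P = 1%:M. Proof. by rewrite mulVmx // uP. Qed.

Lemma ESE : E *m S *m E = E. Proof. by case: (mpinvP E). Qed.
Lemma SES : S *m E *m S = S. Proof. by case: (mpinvP E). Qed.
Lemma EST : (E *m S)^T = E *m S. Proof. by case: (mpinvP E). Qed.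
Lemma SET : (S *m E)^T = S *m E. Proof. by case: (mpinvP E). Qed.

Lemma F1_gen (Q : 'M[R]_n) (E' S' : 'M[R]_m) : posdef Q -> E' = B *m Q *m B^T ->
  E' *m S' *m E' = E' -> (S' *m E')^T = S' *m E' -> B^T *m S' *m E' = B^T.
Proof.
move=> pQ eE h1 h2.
set Z := 1%:M - S' *m E'.
have EZ : E' *m Z = 0 by rewrite /Z mulmxBr mulmx1 mulmxA h1 subrr.
have ZT : Z^T = Z by rewrite /Z linearB /= trmx1 h2.
have : B^T *m Z = 0.
  apply: (pd_zero pQ).
  by rewrite trmx_mul trmxK ZT -!mulmxA (mulmxA B) (mulmxA (B *m Q)) -eE EZ !mulmx0.
by rewrite /Z mulmxBr mulmx1 mulmxA => /eqP; rewrite subr_eq0 => /eqP <-.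
Qed.

Lemma F2_gen (Q : 'M[R]_n) (E' S' : 'M[R]_m) : posdef Q -> E' = B *m Q *m B^T ->
  E' *m S' *m E' = E' -> (E' *m S')^T = E' *m S' -> E' *m S' *m B = B.
Proof.
move=> pQ eE h1 h2.
set U := 1%:M - E' *m S'.
have UE : U *m E' = 0 by rewrite /U mulmxBl mul1mx h1 subrr.
have UT : U^T = U by rewrite /U linearB /= trmx1 h2.
have : B^T *m U = 0.
  apply: (pd_zero pQ).
  by rewrite trmx_mul trmxK UT !mulmxA -(mulmxA U) -(mulmxA U) -eE UE mul0mx.
move=> /(congr1 trmx); rewrite trmx_mul UT trmxK trmx0.
by rewrite /U mulmxBl mul1mx => /eqP; rewrite subr_eq0 => /eqP <-.
Qed.

Lemma F1 : B^T *m S *m E = B^T.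
Proof. by apply: (F1_gen (pd_inv pdP)) => //; [exact: ESE | exact: SET]. Qed.
Lemma F2 : E *m S *m B = B.
Proof. by apply: (F2_gen (pd_inv pdP)) => //; [exact: ESE | exact: EST]. Qed.

End Blk.

Section Abs.
Variables (R : realType) (n m : nat) (W P Pi : 'M[R]_n) (B : 'M[R]_(m, n)) (E S : 'M[R]_m).
Hypotheses (hPPi : P *m Pi = 1%:M) (hPiP : Pi *m P = 1%:M)
  (hE : E = B *m Pi *m B^T) (hESE : E *m S *m E = E) (hSES : S *m E *m S = S)
  (hEST : (E *m S)^T = E *m S) (hSET : (S *m E)^T = S *m E)
  (hF1 : B^T *m S *m E = B^T) (hF2 : E *m S *m B = B).
Local Notation X := (Pi - Pi *m B^T *m S *m B *m Pi).

Lemma cE k (M : 'M_(k, m)) : M *m B *m Pi *m B^T = M *m E.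
Proof. by rewrite hE !mulmxA. Qed.
Lemma cF1 k (M : 'M_(k, n)) : M *m B^T *m S *m E = M *m B^T.
Proof. by rewrite -{2}hF1 !mulmxA. Qed.
Lemma cF2 k (M : 'M_(k, m)) : M *m E *m S *m B = M *m B.
Proof. by rewrite -{2}hF2 !mulmxA. Qed.
Lemma cSES k (M : 'M_(k, m)) : M *m S *m E *m S = M *m S.
Proof. by rewrite -{3}hSES !mulmxA. Qed.
Lemma cPPi k (M : 'M_(k, n)) : M *m P *m Pi = M.
Proof. by rewrite -mulmxA hPPi mulmx1. Qed.
Lemma cPiP k (M : 'M_(k, n)) : M *m Pi *m P = M.
Proof. by rewrite -mulmxA hPiP mulmx1. Qed.

Lemma XBt : X *m B^T = 0.
Proof.
rewrite mulmxBl ?mulmxA cE cF1; exact: subrr.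
Qed.

Lemma BX : B *m X = 0.
Proof. by rewrite mulmxBr ?mulmxA -hE hF2 subrr. Qed.

Lemma PX : P *m X = 1%:M - B^T *m S *m B *m Pi.
Proof. by rewrite mulmxBr ?mulmxA hPPi !mul1mx. Qed.

Lemma XP : X *m P = 1%:M - Pi *m B^T *m S *m B.
Proof. by rewrite mulmxBl ?mulmxA hPiP cPiP. Qed.

Local Notation Y := (block_mx X (- (Pi *m B^T *m S)) (S *m B *m Pi) S).
Local Notation M := (block_mx P B^T (- B) 0).
Local Notation A := (block_mx W B^T (- B) 0).

Lemma MY : M *m Y = block_mx 1%:M 0 0 (E *m S).
Proof.
rewrite mulmx_block !mulNmx PX BX !mulmxN ?mulmxA.
by rewrite hPPi mul1mx subrK addNr oppr0 !mul0mx !addr0 opprK -hE.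
Qed.

Lemma YM : Y *m M = block_mx 1%:M 0 0 (S *m E).
Proof.
rewrite mulmx_block XP XBt !mulmxN !mulNmx !mulmx0 ?mulmxA.
by rewrite opprK subrK subrr cPiP subrr addr0 cE.
Qed.

Lemma Y_MP : is_MP M Y.
Proof.
split.
- by rewrite MY mulmx_block !mul1mx !mul0mx !addr0 !add0r mulmxN hF2 mulmx0.
- by rewrite YM mulmx_block !mul1mx !mul0mx !addr0 !add0r ?mulmxA !hSES.
- by rewrite MY tr_block_mx hEST !trmx0 trmx1.
- by rewrite YM tr_block_mx hSET !trmx0 trmx1.
Qed.

Local Notation G := (X *m (P - W)).
Local Notation H := (S *m B *m Pi *m (P - W)).
Local Notation Q := (1%:M - S *m E).

Lemma YA : 1%:M - Y *m A = block_mx G 0 H Q.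
Proof.
rewrite mulmx_block XBt !mulmxN !mulNmx !mulmx0 opprK ?mulmxA subrr cE addr0.
rewrite (scalar_mx_block n m) opp_block_mx add_block_mx !oppr0 !add0r.
congr block_mx.
- by rewrite mulmxBr XP opprD addrA addrAC.
- by rewrite opprB mulmxBr ?mulmxA cPiP.
Qed.

Lemma QH : Q *m H = 0.
Proof. by rewrite mulmxBl mul1mx ?mulmxA hSES subrr. Qed.

Lemma QQ : Q *m Q = Q.
Proof. by rewrite mulmxBl mul1mx mulmxBr mulmx1 ?mulmxA hSES subrr subr0. Qed.

Lemma Tpow k : (block_mx G 0 H Q) ^+ k.+1 =
  block_mx 0 0 0 Q + col_mx G H *m G ^+ k *m row_mx 1%:M 0.
Proof.
have qh := QH; have qq := QQ.
move: qh qq; set G0 := X *m (P - W); set H0 := S *m B *m Pi *m (P - W); set Q0 := Q.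
move=> qh qq.
elim: k => [|k IH].
  rewrite expr1 expr0 mulmx1 mul_col_row !mulmx1 !mulmx0 add_block_mx.
  rewrite !add0r addr0. reflexivity.
rewrite exprS -mulmxE IH mulmxDr.
congr (_ + _).
  by rewrite mulmx_block !mulmx0 !mul0mx !addr0 add0r qq.
rewrite !mulmxA mul_block_col mul0mx addr0 qh addr0 -mul_col_mx.
by rewrite exprS -mulmxE !mulmxA.
Qed.

End Abs.

Section Iter.
Variables (R : realType) (N : nat) (A Y : 'M[R]_N) (b y0 x0 : 'cV[R]_N).
Hypothesis hb : b = A *m y0.

Lemma iterE k : iter_seq A Y b x0 k = y0 + (1%:M - Y *m A) ^+ k *m (x0 - y0).
Proof.
elim: k => [|k IH] /=.
  by rewrite expr0 mul1mx addrC subrK.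
rewrite IH hb exprS -mulmxE -mulmxA; set D := _ *m (x0 - y0).
rewrite mulmxBl mul1mx mulmxDr mulmxDr opprD mulmxDr !mulmxN addNKr !mulmxA.
by rewrite addrA.
Qed.
End Iter.

Section Rec.
Variable R : realType.

Lemma ev_ex (P : nat -> Prop) : (\forall k \near \oo, P k) -> exists N, forall k, (N <= k)%N -> P k.
Proof. by case=> N _ HN; exists N => k hk; apply: HN. Qed.

Lemma rec0 (a e : nat -> R) (c : R) : 0 <= c -> c < 1 -> (forall k, 0 <= a k) ->
  (forall k, a k.+1 <= c * a k + e k) -> e @ \oo --> 0 -> a @ \oo --> 0.
Proof.
move=> c0 c1 a0 hrec he; apply/cvgr0Pnorm_le => eps eps0.
have e2 : 0 < eps / 2 * (1 - c) by rewrite mulr_gt0 // ?divr_gt0 // subr_gt0.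
have [N HN] := ev_ex ((proj1 (cvgr0Pnorm_le _)) he _ e2).
have step j : a (j + N)%N - eps / 2 <= c ^+ j * a N.
  elim: j => [|j IH]; first by rewrite add0n expr0 mul1r lerBlDr lerDl divr_ge0 // ltW.
  have h1 := hrec (j + N)%N.
  have h2 : e (j + N)%N <= eps / 2 * (1 - c).
    by apply: le_trans (ler_norm _) (HN _ _); rewrite leq_addl.
  have h3 : c * (a (j + N)%N - eps / 2) <= c * (c ^+ j * a N) by rewrite ler_wpM2l.
  rewrite addSn exprS -mulrA.
  apply: le_trans h3; rewrite mulrBr.
  move: h1 h2; set x := a (j + N)%N; set y := a (j + N).+1; set z := e (j + N)%N.
  move=> h1 h2; rewrite mulrBr mulr1 in h2.
  have -> : c * (eps / 2) = eps / 2 - (eps / 2 - c * (eps / 2)) by rewrite subKr.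
  rewrite mulrC in h2; lra.
have hc : (fun j => c ^+ j * a N) @ \oo --> 0.
  by rewrite -(mul0r (a N)); apply: cvgMr_tmp; apply: cvg_expr; rewrite ger0_norm.
have [M HM] := ev_ex ((proj1 (cvgr0Pnorm_le _)) hc _ (divr_gt0 eps0 (ltr0Sn _ 1))).
exists (M + N)%N => // k /= hk.
have -> : k = ((k - N) + N)%N by rewrite subnK // (leq_trans _ hk) // leq_addl.
rewrite ger0_norm //.
have hMk : (M <= k - N)%N by rewrite leq_subRL ?(leq_trans _ hk) ?leq_addl // addnC.
have h2 := step (k - N)%N; have h1 := HM _ hMk.
have h3 := le_trans (ler_norm _) h1; lra.
Qed.

End Rec.

Section Cplx.
Variable R : realType.
Local Notation nc := (@Normc.normc R).

Lemma nc_ge0 (z : R[i]) : 0 <= nc z.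
Proof. by case: z => a b; rewrite /Normc.normc sqrtr_ge0. Qed.

Definition nrm n (Z : 'M[R[i]]_n) : R := \sum_i \sum_j nc (Z i j).

Lemma nrm_ge0 n (Z : 'M[R[i]]_n) : 0 <= nrm Z.
Proof. by apply: sumr_ge0 => i _; apply: sumr_ge0 => j _; apply: nc_ge0. Qed.

Lemma nrmD n (Z1 Z2 : 'M[R[i]]_n) : nrm (Z1 + Z2) <= nrm Z1 + nrm Z2.
Proof.
rewrite /nrm -big_split /=; apply: ler_sum => i _.
rewrite -big_split /=; apply: ler_sum => j _; rewrite mxE.
exact: le_normcD.
Qed.

Lemma nrmZ n (z : R[i]) (Z : 'M[R[i]]_n) : nrm (z *: Z) = nc z * nrm Z.
Proof.
rewrite /nrm mulr_sumr; apply: eq_bigr => i _; rewrite mulr_sumr.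
by apply: eq_bigr => j _; rewrite mxE Normc.normcM.
Qed.

Lemma nrm0 n : nrm (0 : 'M[R[i]]_n) = 0.
Proof.
rewrite /nrm big1 // => i _; rewrite big1 // => j _; rewrite mxE.
by rewrite Normc.normc0.
Qed.

Lemma nc_le_nrm n (Z : 'M[R[i]]_n) i j : nc (Z i j) <= nrm Z.
Proof.
rewrite /nrm (bigD1 i) //= (bigD1 j) //=.
have h1 : 0 <= \sum_(j0 | j0 != j) nc (Z i j0) by apply: sumr_ge0 => *; apply: nc_ge0.
have h2 : 0 <= \sum_(i0 | i0 != i) \sum_j nc (Z i0 j).
  by apply: sumr_ge0 => *; apply: sumr_ge0 => *; apply: nc_ge0.
lra.
Qed.

Lemma comm_prod n (Gc : 'M[R[i]]_n.+1) (s : seq R[i]) :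
  Gc * \prod_(z <- s) (Gc - z%:M) = \prod_(z <- s) (Gc - z%:M) * Gc.
Proof.
elim: s => [|z s IH]; first by rewrite big_nil mul1r mulr1.
rewrite big_cons mulrA -[RHS]mulrA -IH mulrA; congr (_ * _).
by rewrite mulrBr mulrBl -!mulmxE scalar_mxC.
Qed.

Lemma prod_cvg n (Gc : 'M[R[i]]_n.+1) (s : seq R[i]) :
  (forall z, z \in s -> nc z < 1) ->
  (fun k => nrm ((\prod_(z <- s) (Gc - z%:M)) * Gc ^+ k)) @ \oo --> 0 ->
  (fun k => nrm (Gc ^+ k)) @ \oo --> 0.
Proof.
elim: s => [|z s IH] hs h.
  by move: h; under eq_fun do rewrite big_nil mul1r.
apply: IH; first by move=> y ys; apply: hs; rewrite inE ys orbT.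
apply: (rec0 (c := nc z) (e := fun k =>
   nrm ((\prod_(z <- z :: s) (Gc - z%:M)) * Gc ^+ k))) => //.
- exact: nc_ge0.
- by apply: hs; rewrite inE eqxx.
- by move=> k; apply: nrm_ge0.
move=> k /=.
set F := \prod_(z0 <- s) (Gc - z0%:M).
have -> : F * Gc ^+ k.+1 = z *: (F * Gc ^+ k) + (Gc - z%:M) * F * Gc ^+ k.
  have sc (Z : 'M[R[i]]_n.+1) : z%:M * Z = z *: Z by exact: mul_scalar_mx.
  by rewrite exprS mulrA -comm_prod !mulrBl sc scalerAl addrC subrK.
rewrite big_cons -/F -mulrA.
by apply: le_trans (nrmD _ _) _; rewrite nrmZ mulrA.
Qed.

End Cplx.

Section Spec.
Variable R : realType.
Local Notation nc := (@Normc.normc R).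

Lemma cplxX n (G : 'M[R]_n) k : cplx_mx (G ^+ k) = (cplx_mx G) ^+ k.
Proof.
elim: k => [|k IH]; first by rewrite !expr0 /cplx_mx map_mx1.
rewrite !exprS -IH /cplx_mx -!mulmxE map_mxM. done.
Qed.

Lemma nc_real (x : R) : nc ((x%:C)%C) = `|x|.
Proof. by rewrite /Normc.normc /= expr0n /= addr0 sqrtr_sqr. Qed.

Lemma cplx_entry n (G : 'M[R]_n) i j : cplx_mx G i j = ((G i j)%:C)%C.
Proof. by rewrite /cplx_mx mxE. Qed.

Lemma pow_cvg0 n (G : 'M[R]_n.+1) :
  (forall l, eigenvalue (cplx_mx G) l -> nc l < 1) ->
  forall i j, (fun k => (G ^+ k) i j) @ \oo --> 0.
Proof.
move=> hev i j; set Gc := cplx_mx G.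
have [rs hrs] := closed_field_poly_normal (char_poly Gc).
have mon : lead_coef (char_poly Gc) = 1 by apply/monicP; apply: char_poly_monic.
rewrite mon scale1r in hrs.
have h0 : \prod_(z <- rs) (Gc - z%:M) = 0.
  have := Cayley_Hamilton Gc; rewrite hrs rmorph_prod => <-.
  by apply: eq_bigr => z _; rewrite rmorphB /= horner_mx_X horner_mx_C.
have hz : forall z, z \in rs -> nc z < 1.
  by move=> z zs; apply: hev; rewrite eigenvalue_root_char hrs root_prod_XsubC.
have := @prod_cvg _ _ Gc _ hz; rewrite h0.
under eq_fun do rewrite mul0r nrm0.
move=> /(_ (cvg_cst _)) hc.
apply/norm_cvg0P; apply: (@squeeze_cvgr _ _ _ _ (cst 0) (fun k => nrm (Gc ^+ k))).
- near=> k; rewrite normr_ge0 /=.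
  by rewrite -nc_real -cplx_entry cplxX nc_le_nrm.
- exact: cvg_cst.
- exact: hc.
Unshelve. all: by end_near.
Qed.

End Spec.

Section Eig.
Variable R : realType.
Local Notation nc := (@Normc.normc R).

Lemma nc_sum (I : finType) (f : I -> R[i]) : nc (\sum_i f i) <= \sum_i nc (f i).
Proof.
elim: (index_enum I) => [|x r IH]; first by rewrite !big_nil Normc.normc0.
rewrite !big_cons; apply: le_trans (le_normcD _ _) _; exact: lerD.
Qed.

Lemma ncM (x y : R[i]) : nc (x * y) = nc x * nc y.
Proof. exact: Normc.normcM. Qed.

Lemma ncX (x : R[i]) k : nc (x ^+ k) = nc x ^+ k.
Proof.
elim: k => [|k IH]; first by rewrite !expr0 Normc.normc1.
by rewrite !exprS ncM IH.
Qed.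

Lemma cvg_sum0l (I : Type) (r : seq I) (f : I -> nat -> R) :
  (forall i, f i @ \oo --> 0) -> (fun k => \sum_(i <- r) f i k) @ \oo --> 0.
Proof.
move=> hf; elim: r => [|x r IH].
  have -> : (fun k => \sum_(i <- [::]) f i k) = (fun _ => 0).
    by apply: funext => k; rewrite big_nil.
  exact: cvg_cst.
have -> : (fun k => \sum_(i <- x :: r) f i k) = f x + (fun k => \sum_(i <- r) f i k).
  by apply: funext => k; rewrite big_cons.
have := cvgD (hf x) IH; rewrite addr0; apply; exact: _.
Qed.

Lemma cvg_sum0 (I : finType) (f : I -> nat -> R) :
  (forall i, f i @ \oo --> 0) -> (fun k => \sum_i f i k) @ \oo --> 0.
Proof. exact: cvg_sum0l. Qed.

Lemma eig_lt1 n (G : 'M[R]_n) :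
  (forall a c, exists l : R, (fun k => (G ^+ k.+1) a c) @ \oo --> l) ->
  forall lam, eigenvalue (cplx_mx G) lam -> lam != 1 -> nc lam < 1.
Proof.
move=> hc lam /eigenvalueP [v hv v0] l1.
set Gc := cplx_mx G.
have vk k : v *m Gc ^+ k = lam ^+ k *: v.
  elim: k => [|k IH]; first by rewrite expr0 mulmx1 scale1r.
  by rewrite exprSr -mulmxE mulmxA IH -scalemxAl hv scalerA exprSr.
have [j vj] : exists j, v 0 j != 0.
  case: (pselect (exists j, v 0 j != 0)) => // hn; exfalso; move/negP: v0; apply.
  apply/eqP/rowP => j; rewrite mxE; apply/eqP/negPn/negP => hj; apply: hn.
  by exists j.
rewrite ltNge; apply/negP => hge.
pose g k a := (G ^+ k.+1) a j.
pose r k := \sum_a nc (v 0 a) * `|g k.+1 a - g k a|.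
have r0 : r @ \oo --> 0.
  apply: cvg_sum0 => a; rewrite -(mulr0 (nc (v 0 a))); apply: cvgMl_tmp.
  have [L hL] := hc a j.
  have hs : (fun k => g k.+1 a) @ \oo --> L.
    by rewrite (cvg_shiftS (fun k => g k a)).
  have := cvg_norm (cvgB hs hL); rewrite subrr normr0; apply.
set delta := nc (lam - 1) * nc (v 0 j).
have dpos : 0 < delta.
  rewrite /delta mulr_gt0 // lt_def nc_ge0 andbT.
    by apply: contra l1 => /eqP /Normc.eq0_normc /eqP; rewrite subr_eq0.
  by apply: contra vj => /eqP /Normc.eq0_normc ->.
have low k : delta <= r k.
  have e1 : (v *m Gc ^+ k.+2) 0 j - (v *m Gc ^+ k.+1) 0 j =
            (lam - 1) * lam ^+ k.+1 * v 0 j.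
    by rewrite !vk !mxE mulrBl mul1r -exprS mulrBl.
  have e2 : (v *m Gc ^+ k.+2) 0 j - (v *m Gc ^+ k.+1) 0 j =
            \sum_a v 0 a * ((g k.+1 a - g k a)%:C)%C.
    rewrite !mxE -sumrB; apply: eq_bigr => a _.
    by rewrite -mulrBr -!cplxX !cplx_entry rmorphB.
  have := nc_sum (fun a => v 0 a * ((g k.+1 a - g k a)%:C)%C).
  rewrite -e2 e1 !ncM ncX.
  under eq_bigr do rewrite ncM nc_real.
  move=> h; apply: le_trans h; rewrite /delta -mulrA ler_wpM2l ?nc_ge0 //.
  by rewrite ler_peMl ?nc_ge0 // exprn_ege1.
have [N HN] := ev_ex ((proj1 (cvgr0Pnorm_le _)) r0 _ (divr_gt0 dpos (ltr0Sn _ 1))).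
have := HN N (leqnn _); have := low N.
have := ler_norm (r N); lra.
Qed.

End Eig.

Section Gam.
Variable R : realType.
Local Notation nc := (@Normc.normc R).

Lemma fin_max (s : seq R[i]) (P : R[i] -> Prop) :
  (forall z, z \in s -> P z -> nc z < 1) ->
  exists c : R, c < 1 /\ forall z, z \in s -> P z -> nc z <= c.
Proof.
elim: s => [|z s IH] h; first by exists 0; split => // y.
have [c [c1 hc]] : exists c : R, c < 1 /\ forall y, y \in s -> P y -> nc y <= c.
  by apply: IH => y ys; apply: h; rewrite inE ys orbT.
case: (pselect (P z)) => Pz.
  have hz := h z (mem_head _ _) Pz.
  case: (lerP (nc z) c) => hzc.
    exists c; split => // y; rewrite inE => /orP [/eqP -> //|]; exact: hc.
  exists (nc z); split => // y; rewrite inE => /orP [/eqP -> //|ys Py].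
  by apply: le_trans (hc _ ys Py) (ltW hzc).
exists c; split => // y; rewrite inE => /orP [/eqP -> //|]; exact: hc.
Qed.

Lemma eig_fin n (G : 'M[R]_n) : exists rs : seq R[i],
  forall l, eigenvalue (cplx_mx G) l -> l \in rs.
Proof.
have [rs hrs] := closed_field_poly_normal (char_poly (cplx_mx G)).
have mon : lead_coef (char_poly (cplx_mx G)) = 1.
  by apply/monicP; apply: char_poly_monic.
rewrite mon scale1r in hrs.
by exists rs => l; rewrite eigenvalue_root_char hrs root_prod_XsubC.
Qed.

Lemma gamma_lt1 n (G : 'M[R]_n) : gamma G < 1 <->
  (forall l, eigenvalue (cplx_mx G) l -> l != 1 -> nc l < 1).
Proof.
have [rs hrs] := eig_fin G.
rewrite /gamma; set S := [set _ | _ in _].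
have ub : forall x, S x -> x <= \sum_(z <- rs) nc z.
  move=> x [l [el _] <-]; have lr := hrs _ el.
  rewrite (big_rem l lr) /= lerDl; apply: sumr_ge0 => *; exact: nc_ge0.
split.
  move=> g1 l el l1; apply: le_lt_trans g1.
  apply: sup_upper_bound; last by exists l.
  split; first by exists (nc l), l.
  by exists (\sum_(z <- rs) nc z) => x; apply: ub.
move=> h.
have [c [c1 hc]] := fin_max (P := fun z => eigenvalue (cplx_mx G) z /\ z != 1) 
  (s := rs) (fun z _ hz => h z hz.1 hz.2).
case: (pselect (S !=set0)) => [ne|em].
  apply: le_lt_trans c1; apply: ge_sup => // x [l [el l1] <-].
  by apply: hc => //; apply: hrs.
have -> : S = set0 by apply/eqP/negPn/negP => /set0P.
by rewrite sup0 ltr01.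
Qed.

End Gam.

Section Fin.
Variable R : realType.
Local Notation nc := (@Normc.normc R).

Lemma colinj_unit n (A : 'M[R]_n) :
  (forall x : 'cV[R]_n, A *m x = 0 -> x = 0) -> A \in unitmx.
Proof.
move=> h; rewrite -unitmx_tr -row_free_unit; apply/inj_row_free => v hv.
have : v^T = 0 by apply: h; rewrite -(trmxK A) -trmx_mul hv trmx0.
by move/(congr1 trmx); rewrite trmxK trmx0.
Qed.

Lemma no_eig1 n (G : 'M[R]_n) :
  (forall x : 'cV[R]_n, G *m x = x -> x = 0) -> ~~ eigenvalue (cplx_mx G) 1.
Proof.
move=> h; apply/negP => /eigenvalueP [v hv v0].
have u : (1%:M - G) \in unitmx.
  apply: colinj_unit => x hx; apply: h.
  by move/eqP: hx; rewrite mulmxBl mul1mx subr_eq0 => /eqP <-.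
have uc : (1%:M - cplx_mx G) \in unitmx.
  rewrite /cplx_mx -(map_mx1 (real_complex R)) -map_mxB unitmxE det_map_mx.
  by rewrite unitfE fmorph_eq0 -unitfE -unitmxE.
have : v *m (1%:M - cplx_mx G) = 0 by rewrite mulmxBr mulmx1 hv scale1r subrr.
move=> /(congr1 (mulmx^~ (invmx (1%:M - cplx_mx G)))).
rewrite -mulmxA mulmxV // mulmx1 mul0mx => ev.
by move/negP: v0; apply; apply/eqP.
Qed.

Lemma pow_cvg0' n (G : 'M[R]_n) :
  (forall l, eigenvalue (cplx_mx G) l -> nc l < 1) ->
  forall i j, (fun k => (G ^+ k) i j) @ \oo --> 0.
Proof.
case: n G => [|n] G h i; first by case: i.
exact: pow_cvg0.
Qed.

Lemma cvg_mid0 p q r s (C : 'M[R]_(p, q)) (Z : nat -> 'M[R]_(q, r)) (D : 'M[R]_(r, s)) :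
  (forall a b, (fun k => Z k a b) @ \oo --> 0) ->
  forall i j, (fun k => (C *m Z k *m D) i j) @ \oo --> 0.
Proof.
move=> hZ i j.
have -> : (fun k => (C *m Z k *m D) i j) =
  (fun k => \sum_l \sum_a (C i a * D l j) * Z k a l).
  apply: funext => k; rewrite mxE; apply: eq_bigr => l _.
  rewrite mxE mulr_suml; apply: eq_bigr => a _; rewrite mulrAC mulrC.
  by rewrite [_ * D l j]mulrC mulrA.
apply: cvg_sum0 => l; apply: cvg_sum0 => a.
by rewrite -(mulr0 (C i a * D l j)); apply: cvgMl_tmp.
Qed.

Lemma fix0 n m (W P Pi : 'M[R]_n) (B : 'M[R]_(m, n)) (E S : 'M[R]_m) :
  posdef W -> P *m Pi = 1%:M -> Pi *m P = 1%:M -> E = B *m Pi *m B^T ->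
  E *m S *m B = B -> forall x : 'cV[R]_n,
  (Pi - Pi *m B^T *m S *m B *m Pi) *m (P - W) *m x = x -> x = 0.
Proof.
move=> pW hPPi hPiP hE hF2 x h.
set X := Pi - Pi *m B^T *m S *m B *m Pi in h.
set K := Pi *m B^T *m S *m B.
have XP : X *m P = 1%:M - K by apply: XP.
have BX : B *m X = 0 by apply: (BX hE hF2).
have PX : P *m X = 1%:M - B^T *m S *m B *m Pi by apply: PX.
rewrite mulmxBr XP mulmxBl (mulmxBl 1%:M K) mul1mx in h.
have h2 : K *m x + X *m W *m x = 0.
  have : x + - (K *m x + X *m W *m x) = x + 0 by rewrite addr0 opprD addrA.
  by move/addrI/eqP; rewrite oppr_eq0 => /eqP.
have Bx : B *m x = 0.
  have := congr1 (mulmx B) h2; rewrite mulmxDr mulmx0 /K !mulmxA -hE hF2 BX.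
  by rewrite !mul0mx addr0.
have XWx : X *m W *m x = 0.
  by move: h2; rewrite /K -!mulmxA Bx !mulmx0 add0r mulmxA.
have Wx : W *m x = B^T *m (S *m B *m Pi *m W *m x).
  have := congr1 (mulmx P) XWx; rewrite mulmx0 !mulmxA PX mulmxBl mul1mx.
  by rewrite mulmxBl => /eqP; rewrite subr_eq0 => /eqP ->.
apply: (pd_zero_vec pW).
by rewrite -mulmxA Wx mulmxA -trmx_mul Bx trmx0 mul0mx mxE.
Qed.

End Fin.

Lemma top_lemma (R : realType) n m (G : 'M[R]_n) (H : 'M[R]_(m, n)) (Q : 'M[R]_m) k
  (p : 'cV[R]_n) (q : 'cV[R]_m) :
  usubmx ((block_mx 0 0 0 Q + col_mx G H *m G ^+ k *m row_mx 1%:M 0) *m col_mx p q)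
  = G ^+ k.+1 *m p.
Proof.
rewrite mulmxDl mul_block_col !mul0mx addr0 -!mulmxA mul_row_col mul0mx addr0.
rewrite mul1mx mul_col_mx add_col_mx col_mxKu add0r.
by rewrite exprS -mulmxE mulmxA.
Qed.

Unset Implicit Arguments.
Close Scope classical_set_scope.

Theorem theorem1 (R : realType) (n m : nat)
  (W P : 'M[R]_n) (B : 'M[R]_(m, n)) (b : 'cV[R]_(n + m)) :
  posdef W -> posdef P ->
  (\rank B < m)%N -> (m <= n)%N ->
  (exists y : 'cV[R]_(n + m), b = block_mx W B^T (- B) 0 *m y) ->
  let A : 'M[R]_(n + m) := block_mx W B^T (- B) 0 in
  let M : 'M[R]_(n + m) := block_mx P B^T (- B) 0 in
  let E : 'M[R]_m := B *m invmx P *m B^T in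
  let X : 'M[R]_n := invmx P - invmx P *m B^T *m mpinv E *m B *m invmx P in
  iteration_convergent A (mpinv M) b <-> gamma (X *m (P - W)) < 1.
Proof.
move=> pdW pdP rk mn [y0 hb] A M E X.
pose Pi := invmx P.
pose S := mpinv E.
have hPPi : P *m Pi = 1%:M := PPi pdP.
have hPiP : Pi *m P = 1%:M := PiP pdP.
have hE : E = B *m Pi *m B^T := erefl.
have [hESE hSES hEST hSET] := mpinvP E; rewrite -/S in hESE hSES hEST hSET.
have hF1 : B^T *m S *m E = B^T by apply: (F1_gen (pd_inv pdP)).
have hF2 : E *m S *m B = B by apply: (F2_gen (pd_inv pdP)).
set Y := block_mx X (- (Pi *m B^T *m S)) (S *m B *m Pi) S.
have hY : mpinv M = Y by apply: mpinv_eq; apply: Y_MP.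
set G := X *m (P - W).
set H := S *m B *m Pi *m (P - W).
set Q := 1%:M - S *m E.
have hT : 1%:M - Y *m A = block_mx G 0 H Q by apply: YA.
have hTp k : (block_mx G 0 H Q) ^+ k.+1 =
    block_mx 0 0 0 Q + col_mx G H *m G ^+ k *m row_mx 1%:M 0 by apply: Tpow.
have hx x0 k : iter_seq A (mpinv M) b x0 k.+1 = y0 +
    (block_mx 0 0 0 Q + col_mx G H *m G ^+ k *m row_mx 1%:M 0) *m (x0 - y0).
  by rewrite hY (iterE _ _ hb) hT hTp.
rewrite gamma_lt1; split.
  move=> hconv; apply: eig_lt1 => a c.
  set d0 : 'cV[R]_(n + m) := col_mx (delta_mx c 0) 0.
  have [xs [hxs _]] := hconv (y0 + d0).
  exists (xs (lshift m a) 0 - y0 (lshift m a) 0).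
  have h1 := hxs (lshift m a) 0.
  rewrite -(cvg_shiftS (fun k => iter_seq A (mpinv M) b (y0 + d0) k (lshift m a) 0)) in h1.
  have h2 := cvgB h1 (cvg_cst (y0 (lshift m a) 0)).
  have ed : y0 + d0 - y0 = d0 by rewrite addrAC subrr add0r.
  have -> : (fun k => (G ^+ k.+1) a c) = (fun k =>
     iter_seq A (mpinv M) b (y0 + d0) k.+1 (lshift m a) 0 - y0 (lshift m a) 0).
    apply: funext => k; rewrite hx ed [in RHS]mxE addrAC subrr add0r.
    have -> : forall Z : 'cV[R]_(n + m), Z (lshift m a) 0 = usubmx Z a 0.
      by move=> Z; rewrite mxE.
    by rewrite /d0 top_lemma -colE mxE.
  by apply: h2.
move=> hg x0.
have hev l : eigenvalue (cplx_mx G) l -> Normc.normc l < 1.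
  move=> el; case: (eqVneq l 1) => [l1|l1]; last exact: hg.
  have := no_eig1 (G := G) (fix0 pdW hPPi hPiP hE hF2).
  by rewrite -l1 el.
have hG0 := pow_cvg0' hev.
set d := x0 - y0.
set Lq : 'M[R]_(n + m) := block_mx 0 0 0 Q.
exists (y0 + Lq *m d); split.
  move=> i j.
  rewrite -(cvg_shiftS (fun k => iter_seq A (mpinv M) b x0 k i j)).
  have -> : (fun k => iter_seq A (mpinv M) b x0 k.+1 i j) = (fun k =>
     (y0 + Lq *m d) i j + (col_mx G H *m G ^+ k *m (row_mx 1%:M 0 *m d)) i j).
    apply: funext => k; rewrite hx mulmxDl addrA.
    by rewrite -(mulmxA (col_mx G H *m G ^+ k)) [LHS]mxE.
  have := cvgD (cvg_cst ((y0 + Lq *m d) i j))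
    (@cvg_mid0 R _ _ _ _ (col_mx G H) (fun k => G ^+ k) (row_mx 1%:M 0 *m d) hG0 i j).
  by rewrite addr0; apply.
have BQ : B^T *m Q = 0 by rewrite /Q mulmxBr mulmx1 mulmxA hF1 subrr.
have ALq : A *m Lq = 0.
  by rewrite /A /Lq mulmx_block !mulmx0 !addr0 BQ !add0r mul0mx block_mx0.
by rewrite mulmxDr -hb mulmxA ALq mul0mx addr0.
Qed.
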